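(* There exist a finite rank operator $S$ on $\ell_2$ (complex) with $\|I-S\|=1$, an element $\phi\in M_0(B_{\ell_2})$ of the fiber over $0$ of the spectrum of $H^\infty(B_{\ell_2})$, and $f\in H^\infty(B_{\ell_2})$ such that, with $P=I-S$, $\hat f(\phi)\neq\widehat{f\circ P}(\phi)$.
   Context: $H^\infty(B_{\ell_2})$ is the uniform algebra of all bounded holomorphic functions on the open unit ball $B_{\ell_2}$ of complex $\ell_2$, with the supremum norm. Its spectrum consists of the nonzero multiplicative linear functionals on it; the fiber over $0$, $M_0(B_{\ell_2})$, is the set of those $\phi$ in the spectrum with $\phi(x^* )=0$ for every continuous linear functional $x^*$ on $\ell_2$. $\hat f(\phi)=\phi(f)$. *)

(* Defs.v *)
From Stdlib Require Import Reals ClassicalEpsilon.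
Open Scope R_scope.

Record Cplx : Type := mkC { Re : R ; Im : R }.
Definition C0 : Cplx := mkC 0 0.
Definition Cadd (z w : Cplx) : Cplx := mkC (Re z + Re w) (Im z + Im w).
Definition Copp (z : Cplx) : Cplx := mkC (- Re z) (- Im z).
Definition Csub (z w : Cplx) : Cplx := Cadd z (Copp w).
Definition Cmul (z w : Cplx) : Cplx :=
  mkC (Re z * Re w - Im z * Im w) (Re z * Im w + Im z * Re w).
Definition Cnorm2 (z : Cplx) : R := Re z * Re z + Im z * Im z.
Definition Cabs (z : Cplx) : R := sqrt (Cnorm2 z).

Definition V := nat -> Cplx.
Definition vadd (x y : V) : V := fun n => Cadd (x n) (y n).
Definition vsub (x y : V) : V := fun n => Csub (x n) (y n).
Definition vscal (c : Cplx) (x : V) : V := fun n => Cmul c (x n).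

Definition is_l2 (x : V) : Prop :=
  exists l, infinite_sum (fun n => Cnorm2 (x n)) l.

(* the l2 norm (meaningful for x in l2, where the sum is unique) *)
Definition l2norm (x : V) : R :=
  sqrt (epsilon (inhabits 0) (fun l => infinite_sum (fun n => Cnorm2 (x n)) l)).

Definition ball (x : V) : Prop := is_l2 x /\ l2norm x < 1.

Definition bounded_linear_functional (L : V -> Cplx) : Prop :=
  (forall x y, is_l2 x -> is_l2 y -> L (vadd x y) = Cadd (L x) (L y)) /\
  (forall c x, is_l2 x -> L (vscal c x) = Cmul c (L x)) /\
  (exists M, forall x, is_l2 x -> Cabs (L x) <= M * l2norm x).

Definition bounded_operator (S : V -> V) : Prop :=
  (forall x, is_l2 x -> is_l2 (S x)) /\
  (forall x y, is_l2 x -> is_l2 y -> S (vadd x y) = vadd (S x) (S y)) /\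
  (forall c x, is_l2 x -> S (vscal c x) = vscal c (S x)) /\
  (exists M, forall x, is_l2 x -> l2norm (S x) <= M * l2norm x).

Fixpoint Csum (n : nat) (g : nat -> Cplx) : Cplx :=
  match n with
  | O => C0
  | S m => Cadd (Csum m g) (g m)
  end.

Definition finite_rank_operator (T : V -> V) : Prop :=
  bounded_operator T /\
  exists (n : nat) (v : nat -> V),
    (forall i, (i < n)%nat -> is_l2 (v i)) /\
    forall x, is_l2 x -> exists c : nat -> Cplx,
      T x = (fun k => Csum n (fun i => Cmul (c i) (v i k))).

Definition opnorm_is (T : V -> V) (r : R) : Prop :=
  is_lub (fun s => exists x, is_l2 x /\ l2norm x <= 1 /\ s = l2norm (T x)) r.

Definition holomorphic_on_ball (f : V -> Cplx) : Prop :=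
  forall a, ball a ->
    exists L, bounded_linear_functional L /\
      forall eps, 0 < eps -> exists delta, 0 < delta /\
        forall h, is_l2 h -> l2norm h < delta -> ball (vadd a h) ->
          Cabs (Csub (f (vadd a h)) (Cadd (f a) (L h))) <= eps * l2norm h.

(** H^infty(B_l2): bounded holomorphic functions on the ball
    (functions are identified when they agree on the ball, see below) *)
Definition Hinf (f : V -> Cplx) : Prop :=
  holomorphic_on_ball f /\ exists M, forall x, ball x -> Cabs (f x) <= M.

Definition fadd (f g : V -> Cplx) : V -> Cplx := fun x => Cadd (f x) (g x).
Definition fmul (f g : V -> Cplx) : V -> Cplx := fun x => Cmul (f x) (g x).
Definition fscal (c : Cplx) (f : V -> Cplx) : V -> Cplx := fun x => Cmul c (f x).

Definition in_spectrum (phi : (V -> Cplx) -> Cplx) : Prop :=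
  (forall f g, Hinf f -> Hinf g -> (forall x, ball x -> f x = g x) ->
     phi f = phi g) /\
  (forall f g, Hinf f -> Hinf g -> phi (fadd f g) = Cadd (phi f) (phi g)) /\
  (forall c f, Hinf f -> phi (fscal c f) = Cmul c (phi f)) /\
  (forall f g, Hinf f -> Hinf g -> phi (fmul f g) = Cmul (phi f) (phi g)) /\
  (exists f, Hinf f /\ phi f <> C0).

Definition in_fiber0 (phi : (V -> Cplx) -> Cplx) : Prop :=
  in_spectrum phi /\
  forall L, bounded_linear_functional L -> phi L = C0.

(* Main.v *)
Require Import Defs.
From Stdlib Require Import Reals ClassicalEpsilon.
From Stdlib Require Import Lra Lia Psatz FunctionalExtensionality Classical Arith.
From Coquelicot Require Import Coquelicot.
Module UF.
From mathcomp Require Import all_boot boolp classical_sets filter.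
Lemma ultra_exists : exists U : (nat -> Prop) -> Prop,
 (forall A B, U A -> U B -> U (fun n => A n /\ B n)) /\
 (forall A B : nat -> Prop, (forall n, A n -> B n) -> U A -> U B) /\
 ~ U (fun _ => False) /\
 (forall A, U A \/ U (fun n => ~ A n)) /\
 (forall N, U (fun n => (N <= n)%coq_nat)).
Proof.
have [G [GU sub]] := @ultraFilterLemma nat (filter.eventually) _.
exists G; split; [|split; [|split; [|split]]].
- by move=> A B ? ?; apply: filterI.
- by move=> A B AB ?; apply: filterS AB _.
- move=> G0; have : G set0 by []. by apply: filter_not_empty.
- by move=> A; case: (in_ultra_setVsetC A GU) => ?; [left|right].
- move=> N; apply: sub; exists N => // n /= /leP //.
Qed.
End UF.
Require Import Defs.
Open Scope R_scope.

Definition toC (z : Cplx) : C := (Re z, Im z).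
Definition ofC (c : C) : Cplx := mkC (fst c) (snd c).
Lemma toC_ofC c : toC (ofC c) = c. Proof. destruct c; reflexivity. Qed.
Lemma toC_inj z w : toC z = toC w -> z = w.
Proof. destruct z, w; unfold toC; simpl; intro H; injection H; intros; subst; auto. Qed.
Lemma toC_add z w : toC (Cadd z w) = (toC z + toC w)%C. Proof. reflexivity. Qed.
Lemma toC_mul z w : toC (Cmul z w) = (toC z * toC w)%C. Proof. reflexivity. Qed.
Lemma toC_sub z w : toC (Csub z w) = (toC z - toC w)%C. Proof. reflexivity. Qed.
Lemma toC_C0 : toC C0 = 0%C. Proof. reflexivity. Qed.
Lemma Cabs_C z : Cabs z = Cmod (toC z).
Proof. unfold Cabs, Cmod, Cnorm2, toC; simpl; f_equal; ring. Qed.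
Lemma Cnorm2_C z : Cnorm2 z = (Cmod (toC z))^2.
Proof. unfold Cmod, Cnorm2, toC; cbv [fst snd]. rewrite pow2_sqrt. ring. nra. Qed.
Lemma Cnorm2_ge0 z : 0 <= Cnorm2 z.
Proof. unfold Cnorm2; nra. Qed.
Lemma Cmod_le_parts (c : C) : Cmod c <= Rabs (fst c) + Rabs (snd c).
Proof.
  destruct c as [a b]; unfold Cmod; cbv [fst snd].
  apply Rsqr_incr_0_var. 2: apply Rplus_le_le_0_compat; apply Rabs_pos.
  rewrite Rsqr_sqrt. 2: nra. unfold Rsqr.
  rewrite <- (pow2_abs a), <- (pow2_abs b).
  pose proof (Rabs_pos a); pose proof (Rabs_pos b); nra.
Qed.
Lemma fst_le_Cmod (c : C) : Rabs (fst c) <= Cmod c.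
Proof. destruct c as [a b]; unfold Cmod; cbv [fst snd].
  rewrite <- sqrt_Rsqr_abs. apply sqrt_le_1_alt. unfold Rsqr; nra. Qed.
Lemma snd_le_Cmod (c : C) : Rabs (snd c) <= Cmod c.
Proof. destruct c as [a b]; unfold Cmod; cbv [fst snd].
  rewrite <- sqrt_Rsqr_abs. apply sqrt_le_1_alt. unfold Rsqr; nra. Qed.

Fixpoint sN (u : nat -> R) (N : nat) : R :=
  match N with O => 0 | S m => sN u m + u m end.

Lemma sum_f_R0_sN u n : sum_f_R0 u n = sN u (S n).
Proof. induction n; simpl in *. ring. rewrite IHn. ring. Qed.

Lemma sN_stable u N : (forall k, (N <= k)%nat -> u k = 0) ->
  forall m, sN u (N + m) = sN u N.
Proof.
  intros H m; induction m. now rewrite Nat.add_0_r.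
  rewrite Nat.add_succ_r; simpl. rewrite IHm, H by lia. ring.
Qed.

Lemma is_series_finite u N : (forall k, (N <= k)%nat -> u k = 0) ->
  is_series u (sN u N).
Proof.
  intro H; apply is_series_Reals. intros eps Heps. exists N. intros n Hn.
  rewrite sum_f_R0_sN. replace (S n) with (N + (S n - N))%nat by lia.
  rewrite sN_stable by auto. unfold R_dist. rewrite Rminus_diag, Rabs_R0. lra.
Qed.

Lemma sN_single u j : (forall k, k <> j -> u k = 0) -> sN u (S j) = u j.
Proof.
  intro H. simpl. assert (forall m, (m <= j)%nat -> sN u m = 0).
  { induction m; intros; simpl. auto. rewrite IHm by lia. rewrite H by lia. ring. }
  rewrite H0 by lia. ring.
Qed.

Lemma is_series_single u j : (forall k, k <> j -> u k = 0) -> is_series u (u j).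
Proof.
  intro H. rewrite <- sN_single by auto. apply is_series_finite.
  intros; apply H; lia.
Qed.

Lemma Series_single u j : (forall k, k <> j -> u k = 0) -> Series u = u j.
Proof. intro H. apply is_series_unique, is_series_single, H. Qed.

Definition Q (x : V) : R := Series (fun k => Cnorm2 (x k)).

Lemma is_l2_ex x : is_l2 x <-> ex_series (fun k => Cnorm2 (x k)).
Proof.
  split; intros [l Hl]; exists l; apply is_series_Reals; auto.
Qed.

Lemma Q_ge0 x : is_l2 x -> 0 <= Q x.
Proof.
  intro H; apply is_l2_ex in H. unfold Q.
  rewrite <- (Series_single (fun _ => 0) O) by auto.
  apply Series_le; auto. intros; split. lra. apply Cnorm2_ge0.
Qed.

Lemma l2norm_sqrt x : is_l2 x -> l2norm x = sqrt (Q x).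
Proof.
  intro H. unfold l2norm. f_equal.
  pose proof (epsilon_spec (inhabits 0) (fun l => infinite_sum (fun n => Cnorm2 (x n)) l) H) as E.
  simpl in E. unfold Q. symmetry. apply is_series_unique. apply is_series_Reals. exact E.
Qed.

Lemma l2norm_ge0 x : 0 <= l2norm x.
Proof. unfold l2norm; apply sqrt_pos. Qed.

Lemma l2norm_sq x : is_l2 x -> (l2norm x)^2 = Q x.
Proof. intro H; rewrite l2norm_sqrt by auto. apply pow2_sqrt, Q_ge0, H. Qed.

Lemma ball_Q x : ball x <-> is_l2 x /\ Q x < 1.
Proof.
  split; intros [H1 H2]; split; auto.
  - rewrite l2norm_sqrt in H2 by auto. pose proof (Q_ge0 x H1).
    destruct (Rlt_le_dec (Q x) 1); auto. apply sqrt_le_1_alt in r. rewrite sqrt_1 in r. lra.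
  - rewrite l2norm_sqrt by auto. rewrite <- sqrt_1. apply sqrt_lt_1_alt. split; auto. apply Q_ge0; auto.
Qed.

Lemma ex_series_nonneg_le (a b : nat -> R) :
  (forall k, 0 <= a k <= b k) -> ex_series b -> ex_series a.
Proof.
  intros H Hb. apply (ex_series_le (K:=R_AbsRing) (V:=R_CompleteNormedModule) a b); auto.
  intro k. change (norm (a k)) with (Rabs (a k)). rewrite Rabs_right. apply H. apply Rle_ge, H.
Qed.

Lemma l2_cmp x y : is_l2 x -> (forall k, Cnorm2 (y k) <= Cnorm2 (x k)) -> is_l2 y /\ Q y <= Q x.
Proof.
  intros Hx H. apply is_l2_ex in Hx.
  assert (Hy : ex_series (fun k => Cnorm2 (y k))).
  { apply (ex_series_nonneg_le _ _ (fun k => conj (Cnorm2_ge0 _) (H k)) Hx). }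
  split. apply is_l2_ex; auto. unfold Q. apply Series_le; auto.
  intro k; split; auto. apply Cnorm2_ge0.
Qed.

Lemma coord_le_Q x j : is_l2 x -> Cnorm2 (x j) <= Q x.
Proof.
  intro Hx. apply is_l2_ex in Hx. unfold Q.
  assert (E : Series (fun k => if Nat.eq_dec k j then Cnorm2 (x j) else 0) = Cnorm2 (x j)).
  { rewrite (Series_single _ j). destruct (Nat.eq_dec j j); tauto.
    intros k Hk. destruct (Nat.eq_dec k j); tauto. }
  rewrite <- E. apply Series_le; auto. intro k. destruct (Nat.eq_dec k j).
  subst; split; [apply Cnorm2_ge0|lra]. split. lra. apply Cnorm2_ge0.
Qed.

Lemma coord_le_norm x j : is_l2 x -> Cmod (toC (x j)) <= l2norm x.
Proof.
  intro Hx. rewrite l2norm_sqrt by auto.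
  rewrite <- (sqrt_pow2 (Cmod (toC (x j)))) by apply Cmod_ge_0.
  apply sqrt_le_1_alt. rewrite <- Cnorm2_C. apply coord_le_Q; auto.
Qed.

Definition sh (x : V) : V := fun k => x (S k).
Lemma sh_l2 x : is_l2 x -> is_l2 (sh x).
Proof. intro H; apply is_l2_ex in H; apply is_l2_ex. unfold sh. apply (ex_series_incr_1 (fun k => Cnorm2 (x k))). auto. Qed.
Lemma Q_sh x : is_l2 x -> Q x = Cnorm2 (x O) + Q (sh x).
Proof. intro H; apply is_l2_ex in H. unfold Q, sh. apply Series_incr_1; auto. Qed.

Definition cser (u : nat -> C) : C :=
  (Series (fun k => fst (u k)), Series (fun k => snd (u k))).
Definition dom (u : nat -> C) (b : nat -> R) := ex_series b /\ forall k, Cmod (u k) <= b k.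

Lemma dom_fst u b : dom u b -> ex_series (fun k => Rabs (fst (u k))) /\ ex_series (fun k => fst (u k)).
Proof.
  intros [Hb H]. assert (H1 : ex_series (fun k => Rabs (fst (u k)))).
  { apply (ex_series_nonneg_le _ b); auto. intro k; split. apply Rabs_pos.
    eapply Rle_trans. apply fst_le_Cmod. auto. }
  split; auto. apply (ex_series_le (K:=R_AbsRing) (V:=R_CompleteNormedModule) _ _ (fun k => Rle_refl _) H1).
Qed.
Lemma dom_snd u b : dom u b -> ex_series (fun k => Rabs (snd (u k))) /\ ex_series (fun k => snd (u k)).
Proof.
  intros [Hb H]. assert (H1 : ex_series (fun k => Rabs (snd (u k)))).
  { apply (ex_series_nonneg_le _ b); auto. intro k; split. apply Rabs_pos.
    eapply Rle_trans. apply snd_le_Cmod. auto. }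
  split; auto. apply (ex_series_le (K:=R_AbsRing) (V:=R_CompleteNormedModule) _ _ (fun k => Rle_refl _) H1).
Qed.

Lemma ex_series_Rscal (c : R) (a : nat -> R) : ex_series a -> ex_series (fun n => c * a n).
Proof.
  intro H. assert (E : forall n, a n * c = c * a n) by (intro; ring).
  apply (ex_series_ext _ _ E). apply ex_series_scal_r; auto.
Qed.

Lemma cser_ext u v : (forall k, u k = v k) -> cser u = cser v.
Proof. intro H; unfold cser; f_equal; apply Series_ext; intro k; rewrite H; auto. Qed.

Lemma cser_plus u v b1 b2 : dom u b1 -> dom v b2 -> cser (fun k => u k + v k)%C = (cser u + cser v)%C.
Proof.
  intros Hu Hv. destruct (dom_fst _ _ Hu), (dom_fst _ _ Hv), (dom_snd _ _ Hu), (dom_snd _ _ Hv).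
  unfold cser, Cplus; cbv [fst snd]. f_equal.
  - rewrite <- Series_plus by auto. apply Series_ext; intro; reflexivity.
  - rewrite <- Series_plus by auto. apply Series_ext; intro; reflexivity.
Qed.

Lemma cser_scal c u b : dom u b -> cser (fun k => c * u k)%C = (c * cser u)%C.
Proof.
  intros Hu. destruct (dom_fst _ _ Hu), (dom_snd _ _ Hu).
  destruct c as [c1 c2]. unfold cser. apply injective_projections; simpl.
  - rewrite <- !Series_scal_l, <- Series_minus.
    apply Series_ext; intro; reflexivity.
    apply ex_series_Rscal; auto. apply ex_series_Rscal; auto.
  - rewrite <- !Series_scal_l, <- Series_plus.
    apply Series_ext; intro; reflexivity.
    apply ex_series_Rscal; auto. apply ex_series_Rscal; auto.
Qed.

Lemma cser_bound u b : dom u b -> Cmod (cser u) <= 2 * Series b.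
Proof.
  intros Hu. destruct (dom_fst _ _ Hu) as [F1 F2], (dom_snd _ _ Hu) as [S1 S2].
  destruct Hu as [Hb H].
  eapply Rle_trans. apply Cmod_le_parts. unfold cser; simpl.
  pose proof (Series_Rabs _ F1). pose proof (Series_Rabs _ S1).
  assert (Series (fun k => Rabs (fst (u k))) <= Series b).
  { apply Series_le; auto. intro k; split. apply Rabs_pos. eapply Rle_trans. apply fst_le_Cmod. auto. }
  assert (Series (fun k => Rabs (snd (u k))) <= Series b).
  { apply Series_le; auto. intro k; split. apply Rabs_pos. eapply Rle_trans. apply snd_le_Cmod. auto. }
  lra.
Qed.

Lemma cser_fst_le u b : dom u b -> fst (cser u) <= Series b.
Proof.
  intros Hu. destruct (dom_fst _ _ Hu) as [F1 F2]. destruct Hu as [Hb H].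
  unfold cser; simpl. eapply Rle_trans. apply Rle_abs.
  eapply Rle_trans. apply Series_Rabs; auto.
  apply Series_le; auto. intro k; split. apply Rabs_pos. eapply Rle_trans. apply fst_le_Cmod. auto.
Qed.

Lemma prod_bound (X H t : R) : 0 < t -> 0 <= X -> 0 <= H -> X * H <= (t * X^2 + H^2 / t) / 2.
Proof.
  intros Ht HX HH.
  assert (0 <= (t * X - H)^2) by apply pow2_ge_0.
  assert (t * (X * H) <= t * ((t * X^2 + H^2 / t) / 2)).
  { replace (t * ((t * X^2 + H^2 / t) / 2)) with ((t*t*X^2 + H^2)/2) by (field; lra).
    assert (E : (t*t*X^2 + H^2)/2 - t * (X * H) = (t * X - H)^2/2) by field. lra. }
  apply Rmult_le_reg_l with t; auto.
Qed.

Definition Gser (a h : V) : C := cser (fun k => toC (a (S k)) * toC (h (S k)))%C.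

Lemma dom_prod a h t : is_l2 a -> is_l2 h -> 0 < t ->
  dom (fun k => toC (a (S k)) * toC (h (S k)))%C
      (fun k => (t * Cnorm2 (a (S k)) + Cnorm2 (h (S k)) / t) / 2).
Proof.
  intros Ha Hh Ht. apply sh_l2, is_l2_ex in Ha. apply sh_l2, is_l2_ex in Hh. unfold sh in *. split.
  - apply ex_series_scal_r. apply (ex_series_plus (K:=R_AbsRing) (V:=R_NormedModule)).
    apply ex_series_Rscal; auto. apply ex_series_scal_r; auto.
  - intro k. rewrite Cmod_mult, !Cnorm2_C. apply prod_bound; auto; apply Cmod_ge_0.
Qed.

Lemma Gser_bound_t a h t : is_l2 a -> is_l2 h -> 0 < t ->
  Cmod (Gser a h) <= t * Q a + Q h / t.
Proof.
  intros Ha Hh Ht. eapply Rle_trans. apply cser_bound, (dom_prod a h t); auto.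
  pose proof (sh_l2 _ Ha) as Ha'. pose proof (sh_l2 _ Hh) as Hh'.
  apply is_l2_ex in Ha'. apply is_l2_ex in Hh'. unfold sh in *.
  rewrite (Series_ext _ (fun k => /2 * (t * Cnorm2 (a (S k)) + /t * Cnorm2 (h (S k))))).
  2: intro; field; lra.
  rewrite Series_scal_l, Series_plus, !Series_scal_l.
  2: apply ex_series_Rscal; auto. 2: apply ex_series_Rscal; auto.
  rewrite (Q_sh a), (Q_sh h) by auto. unfold Q, sh.
  pose proof (Cnorm2_ge0 (a O)). pose proof (Cnorm2_ge0 (h O)).
  set (A := Series (fun k => Cnorm2 (a (S k)))).
  set (B := Series (fun k => Cnorm2 (h (S k)))).
  assert (0 < /t) by (apply Rinv_0_lt_compat; lra).
  unfold Rdiv. nra.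
Qed.

Lemma dom_plus u v b1 b2 : dom u b1 -> dom v b2 -> dom (fun k => u k + v k)%C (fun k => b1 k + b2 k).
Proof.
  intros [H1 H2] [H3 H4]. split.
  apply (ex_series_plus (K:=R_AbsRing) (V:=R_NormedModule)); auto.
  intro k. eapply Rle_trans. apply Cmod_triangle. apply Rplus_le_compat; auto.
Qed.

Lemma dom_scal c u b : dom u b -> dom (fun k => c * u k)%C (fun k => Cmod c * b k).
Proof.
  intros [H1 H2]. split. apply ex_series_Rscal; auto.
  intro k. rewrite Cmod_mult. apply Rmult_le_compat_l; auto. apply Cmod_ge_0.
Qed.

Lemma Gser_bound a h : is_l2 a -> is_l2 h -> Q a <= 1 -> Cmod (Gser a h) <= 2 * l2norm h.
Proof.
  intros Ha Hh HQ. pose proof (l2norm_sq h Hh) as Hr. pose proof (l2norm_ge0 h).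
  pose proof (Q_ge0 a Ha).
  destruct (Rlt_le_dec 0 (l2norm h)) as [Hp|Hp].
  - eapply Rle_trans. apply (Gser_bound_t a h (l2norm h)); auto.
    rewrite <- Hr. replace (l2norm h ^ 2 / l2norm h) with (l2norm h) by (field; lra).
    nra.
  - assert (l2norm h = 0) by lra. rewrite H1 in Hr. simpl in Hr.
    rewrite H1. destruct (Rle_dec (Cmod (Gser a h)) 0) as [|Hn]; [lra|].
    exfalso. assert (Hg : 0 < Cmod (Gser a h) / 2) by lra.
    pose proof (Gser_bound_t a h _ Ha Hh Hg). rewrite <- Hr in H2.
    assert (Q a * (Cmod (Gser a h) / 2) <= Cmod (Gser a h) / 2) by nra.
    unfold Rdiv in H2 at 2. rewrite Rmult_0_l in H2. lra.
Qed.

Lemma Gser_self_bound x : is_l2 x -> Cmod (Gser x x) <= 2 * Q x.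
Proof.
  intro Hx. eapply Rle_trans. apply (Gser_bound_t x x 1); auto; lra.
  unfold Rdiv; rewrite Rinv_1; lra.
Qed.

Lemma Gser_fst_le x : is_l2 x -> fst (Gser x x) <= Q x - Cnorm2 (x O).
Proof.
  intro Hx. rewrite (Q_sh x) by auto. unfold Gser.
  eapply Rle_trans. apply (cser_fst_le _ (fun k => Cnorm2 (x (S k)))).
  - split. pose proof (sh_l2 _ Hx) as H. apply is_l2_ex in H. exact H.
    intro k. rewrite Cmod_mult, Cnorm2_C. simpl; lra.
  - unfold Q, sh. lra.
Qed.

Lemma Gser_add a x y : is_l2 a -> is_l2 x -> is_l2 y -> Gser a (vadd x y) = (Gser a x + Gser a y)%C.
Proof.
  intros Ha Hx Hy. unfold Gser.
  rewrite <- (cser_plus _ _ _ _ (dom_prod a x 1 Ha Hx Rlt_0_1) (dom_prod a y 1 Ha Hy Rlt_0_1)).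
  apply cser_ext; intro k. unfold vadd. rewrite toC_add. ring.
Qed.

Lemma Gser_scal a c x : is_l2 a -> is_l2 x -> Gser a (vscal c x) = (toC c * Gser a x)%C.
Proof.
  intros Ha Hx. unfold Gser.
  rewrite <- (cser_scal _ _ _ (dom_prod a x 1 Ha Hx Rlt_0_1)).
  apply cser_ext; intro k. unfold vscal. rewrite toC_mul. ring.
Qed.

Lemma Gser_sym a h : Gser a h = Gser h a.
Proof. unfold Gser; apply cser_ext; intro; ring. Qed.

Lemma Gser_expand a h : is_l2 a -> is_l2 h ->
  Gser (vadd a h) (vadd a h) = (Gser a a + 2 * Gser a h + Gser h h)%C.
Proof.
  intros Ha Hh.
  pose proof (dom_prod a a 1 Ha Ha Rlt_0_1) as D1.
  pose proof (dom_prod a h 1 Ha Hh Rlt_0_1) as D2.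
  pose proof (dom_prod h h 1 Hh Hh Rlt_0_1) as D3.
  unfold Gser.
  rewrite <- (cser_scal _ _ _ D2).
  rewrite <- (cser_plus _ _ _ _ D1 (dom_scal 2 _ _ D2)).
  rewrite <- (cser_plus _ _ _ _ (dom_plus _ _ _ _ D1 (dom_scal 2 _ _ D2)) D3).
  apply cser_ext; intro k. unfold vadd. rewrite !toC_add. ring.
Qed.

Lemma Cmod_le_mult (x y : C) A B : Cmod x <= A -> Cmod y <= B -> Cmod (x * y) <= A * B.
Proof. intros. rewrite Cmod_mult. apply Rmult_le_compat; auto; apply Cmod_ge_0. Qed.
Lemma Cmod_le_add (x y : C) A B : Cmod x <= A -> Cmod y <= B -> Cmod (x + y) <= A + B.
Proof. intros. eapply Rle_trans. apply Cmod_triangle. lra. Qed.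
Lemma Cmod_le_sub (x y : C) A B : Cmod x <= A -> Cmod y <= B -> Cmod (x - y) <= A + B.
Proof. intros. unfold Cminus. eapply Rle_trans. apply Cmod_triangle. rewrite Cmod_opp. lra. Qed.
Lemma Cmod_sub_lower (x y : C) : Cmod x - Cmod y <= Cmod (x - y).
Proof.
  assert (Cmod x <= Cmod (x - y) + Cmod y).
  { replace x with ((x - y) + y)%C at 1 by ring. apply Cmod_triangle. }
  lra.
Qed.
Lemma Cmod_2 : Cmod 2 = 2.
Proof. rewrite Cmod_R. apply Rabs_right. lra. Qed.

Lemma alg_identity (a0 h0 D G gh : C) : D <> 0%C -> (D - 2*G - gh)%C <> 0%C ->
  ((a0+h0)*(a0+h0) / (D - 2*G - gh) - ((a0*a0)/D + (2*a0*h0*D + 2*(a0*a0)*G)/(D*D)))%C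
  = ((D*D*(h0*h0) + (a0*a0)*D*gh + (2*a0*h0*D + 2*(a0*a0)*G)*(2*G+gh)) / (D*D*(D - 2*G - gh)))%C.
Proof. intros. field. auto. Qed.

Lemma den_lower_bound (D G gh : C) r m : 0 < m -> 0 <= r -> r <= 1 -> r <= m / 12 ->
  m <= Cmod D -> Cmod G <= 2 * r -> Cmod gh <= 2 * r^2 ->
  m / 2 <= Cmod (D - 2*G - gh).
Proof.
  intros. pose proof (Cmod_sub_lower D (2*G + gh)%C).
  replace (D - (2*G + gh))%C with (D - 2*G - gh)%C in H6 by ring.
  assert (Cmod (2*G + gh)%C <= 2 * (2*r) + 2*r^2).
  { apply Cmod_le_add; auto. apply Cmod_le_mult; auto. rewrite Cmod_2; lra. }
  assert (r^2 <= r) by (simpl; nra).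
  lra.
Qed.

Lemma est (a0 h0 D G gh : C) r m : 0 < m -> 0 <= r -> r <= 1 -> r <= m / 12 ->
  Cmod a0 <= 1 -> Cmod h0 <= r -> m <= Cmod D -> Cmod D <= 3 ->
  Cmod G <= 2 * r -> Cmod gh <= 2 * r^2 ->
  Cmod ((D*D*(h0*h0) + (a0*a0)*D*gh + (2*a0*h0*D + 2*(a0*a0)*G)*(2*G+gh)) / (D*D*(D - 2*G - gh)))%C
   <= 150 * r^2 / m^3.
Proof.
  intros Hm Hr0 Hr1 Hrm Ha0 Hh0 HD1 HD2 HG Hgh.
  pose proof (den_lower_bound D G gh r m Hm Hr0 Hr1 Hrm HD1 HG Hgh) as HD'.
  assert (HDD : 0 < Cmod (D*D*(D - 2*G - gh))%C).
  { rewrite !Cmod_mult. apply Rmult_lt_0_compat. apply Rmult_lt_0_compat; lra. lra. }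
  assert (Hne : (D*D*(D - 2*G - gh))%C <> 0%C).
  { intro E. rewrite E, Cmod_0 in HDD. lra. }
  rewrite Cmod_div by auto.
  assert (Hnum : Cmod (D*D*(h0*h0) + (a0*a0)*D*gh + (2*a0*h0*D + 2*(a0*a0)*G)*(2*G+gh))%C
          <= (3*3*(r*r) + 1*1*3*(2*r^2)) + (2*1*r*3 + 2*(1*1)*(2*r))*(2*(2*r) + 2*r^2)).
  { pose proof (Cmod_ge_0 a0). pose proof (Cmod_ge_0 D).
    repeat first [ apply Cmod_le_add | apply Cmod_le_mult ]; auto;
      try (rewrite Cmod_2; lra). }
  rewrite !Cmod_mult.
  assert (Hden : m * m * (m/2) <= Cmod D * Cmod D * Cmod (D - 2*G - gh)%C).
  { apply Rmult_le_compat; try lra. apply Rmult_le_pos; lra. apply Rmult_le_compat; lra. }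
  assert (Hnum' : Cmod (D*D*(h0*h0) + (a0*a0)*D*gh + (2*a0*h0*D + 2*(a0*a0)*G)*(2*G+gh))%C <= 75 * r^2).
  { eapply Rle_trans. exact Hnum. assert (r^2 <= r) by (simpl; nra). simpl. nra. }
  apply Rle_trans with (75 * r^2 / (m * m * (m / 2))).
  - unfold Rdiv. apply Rmult_le_compat. apply Cmod_ge_0.
    left; apply Rinv_0_lt_compat. apply Rmult_lt_0_compat. apply Rmult_lt_0_compat; lra. lra.
    auto. apply Rinv_le_contravar; auto. apply Rmult_lt_0_compat. apply Rmult_lt_0_compat; lra. lra.
  - right. field. lra.
Qed.

Definition fC (x : V) : C := ((toC (x O) * toC (x O)) / (1 - Gser x x))%C.
Definition fF (x : V) : Cplx := ofC (fC x).

Lemma den_lower x : is_l2 x -> 1 - Q x + Cnorm2 (x O) <= Cmod (1 - Gser x x)%C.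
Proof.
  intro Hx. pose proof (Gser_fst_le x Hx).
  eapply Rle_trans. 2: apply fst_le_Cmod. eapply Rle_trans. 2: apply Rle_abs.
  replace (fst (1 - Gser x x)%C) with (1 - fst (Gser x x)) by (simpl; ring). lra.
Qed.

Lemma Cmod_sq_le1 (z : C) : Cmod z ^ 2 <= 1 -> Cmod z <= 1.
Proof. intro H. pose proof (Cmod_ge_0 z). destruct (Rle_dec (Cmod z) 1); auto. simpl in H; nra. Qed.

Lemma fC_bound x : ball x -> Cmod (fC x) <= 1.
Proof.
  intro Hb. apply ball_Q in Hb as [Hx HQ]. pose proof (den_lower x Hx).
  pose proof (Cnorm2_ge0 (x O)).
  assert (Hne : (1 - Gser x x)%C <> 0%C).
  { intro E. rewrite E, Cmod_0 in H. lra. }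
  unfold fC. rewrite Cmod_div by auto. rewrite Cmod_mult.
  replace (Cmod (toC (x O)) * Cmod (toC (x O))) with (Cnorm2 (x O)) by (rewrite Cnorm2_C; ring).
  apply Rmult_le_reg_r with (Cmod (1 - Gser x x)%C). lra.
  unfold Rdiv. rewrite Rmult_assoc, Rinv_l by lra. lra.
Qed.

Lemma f_holo : holomorphic_on_ball fF.
Proof.
  intros a Ha. apply ball_Q in Ha as [Ha HQa].
  pose proof (Q_ge0 a Ha) as HQa0.
  assert (Hm : 0 < 1 - Q a) by lra.
  assert (HD : 1 - Q a <= Cmod (1 - Gser a a)%C).
  { pose proof (den_lower a Ha). pose proof (Cnorm2_ge0 (a O)). lra. }
  assert (HD0 : (1 - Gser a a)%C <> 0%C).
  { intro E. rewrite E, Cmod_0 in HD. lra. }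
  assert (HD3 : Cmod (1 - Gser a a)%C <= 3).
  { replace 3 with (1 + 2 * 1) by ring. apply Cmod_le_sub. rewrite Cmod_1; lra.
    pose proof (Gser_self_bound a Ha). lra. }
  assert (HA0 : Cmod (toC (a O)) <= 1).
  { apply Cmod_sq_le1. rewrite <- Cnorm2_C. pose proof (coord_le_Q a O Ha). lra. }
  pose proof (Cmod_ge_0 (toC (a O))) as HA0'.
  set (D := (1 - Gser a a)%C) in *.
  set (m := 1 - Q a) in *.
  exists (fun h => ofC ((2 * toC (a O) * toC (h O) * D + 2 * (toC (a O) * toC (a O)) * Gser a h) / (D * D))%C).
  split; [split; [|split]|].
  - intros x y Hx Hy. apply toC_inj. rewrite toC_add, !toC_ofC.
    change (toC (vadd x y O)) with (toC (x O) + toC (y O))%C.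
    rewrite Gser_add by auto. field. auto.
  - intros c x Hx. apply toC_inj. rewrite toC_mul, !toC_ofC.
    change (toC (vscal c x O)) with (toC c * toC (x O))%C.
    rewrite Gser_scal by auto. field. auto.
  - exists (10 / (m * m)). intros h Hh. rewrite Cabs_C, toC_ofC.
    assert (HDD : (D * D)%C <> 0%C).
    { intro E. apply (f_equal Cmod) in E. rewrite Cmod_mult, Cmod_0 in E.
      assert (0 < Cmod D * Cmod D) by (apply Rmult_lt_0_compat; lra). lra. }
    rewrite Cmod_div by auto. rewrite Cmod_mult.
    pose proof (l2norm_ge0 h). pose proof (coord_le_norm h O Hh).
    pose proof (Gser_bound a h Ha Hh ltac:(lra)).
    assert (Hn : Cmod (2 * toC (a O) * toC (h O) * D + 2 * (toC (a O) * toC (a O)) * Gser a h)%C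
                 <= 2 * 1 * l2norm h * 3 + 2 * (1 * 1) * (2 * l2norm h)).
    { repeat first [ assumption | (rewrite Cmod_2; lra) | apply Cmod_le_add | apply Cmod_le_mult ]. }
    apply Rle_trans with (10 * l2norm h / (m * m)).
    + unfold Rdiv. apply Rmult_le_compat. apply Cmod_ge_0.
      left; apply Rinv_0_lt_compat. apply Rmult_lt_0_compat; lra. lra.
      apply Rinv_le_contravar. apply Rmult_lt_0_compat; lra. apply Rmult_le_compat; lra.
    + right. field. lra.
  - intros eps Heps.
    assert (Hm3 : 0 < m ^ 3) by (apply pow_lt; lra).
    exists (Rmin 1 (Rmin (m / 12) (eps * m ^ 3 / 150))). split.
    { apply Rmin_pos. lra. apply Rmin_pos. lra. apply Rdiv_lt_0_compat; [nra|lra]. }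
    intros h Hh Hr Hball.
    apply ball_Q in Hball as [Hah _].
    pose proof (Rmin_l 1 (Rmin (m / 12) (eps * m ^ 3 / 150))).
    pose proof (Rmin_r 1 (Rmin (m / 12) (eps * m ^ 3 / 150))).
    pose proof (Rmin_l (m / 12) (eps * m ^ 3 / 150)).
    pose proof (Rmin_r (m / 12) (eps * m ^ 3 / 150)).
    set (r := l2norm h) in *.
    pose proof (l2norm_ge0 h) as Hr0. fold r in Hr0.
    pose proof (l2norm_sq h Hh) as HQh. fold r in HQh.
    pose proof (Gser_bound a h Ha Hh ltac:(lra)) as HG. fold r in HG.
    pose proof (Gser_self_bound h Hh) as Hgh. rewrite <- HQh in Hgh.
    pose proof (coord_le_norm h O Hh) as Hh0. fold r in Hh0.
    rewrite Cabs_C, toC_sub, toC_add, !toC_ofC.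
    unfold fF, fC. rewrite !toC_ofC.
    change (toC (vadd a h O)) with (toC (a O) + toC (h O))%C.
    rewrite Gser_expand by auto.
    replace (1 - (Gser a a + 2 * Gser a h + Gser h h))%C with (D - 2 * Gser a h - Gser h h)%C
      by (unfold D; ring).
    fold D.
    assert (HD' : (D - 2 * Gser a h - Gser h h)%C <> 0%C).
    { pose proof (den_lower_bound D (Gser a h) (Gser h h) r m Hm Hr0 ltac:(lra) ltac:(lra) HD HG ltac:(lra)).
      intro E. rewrite E, Cmod_0 in H3. lra. }
    rewrite alg_identity by auto.
    eapply Rle_trans. apply (est _ _ _ _ _ r m); auto; lra.
    apply Rle_trans with (r * (150 * r / m ^ 3)).
    + right. field. lra.
    + rewrite (Rmult_comm eps). apply Rmult_le_compat_l; auto.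
      apply Rmult_le_reg_r with (m ^ 3); auto. unfold Rdiv. rewrite Rmult_assoc, Rinv_l by lra.
      assert (r <= eps * m ^ 3 / 150) by lra. unfold Rdiv in H3. lra.
Qed.

Lemma f_Hinf : Hinf fF.
Proof.
  split. apply f_holo. exists 1. intros x Hx. rewrite Cabs_C. unfold fF. rewrite toC_ofC.
  apply fC_bound; auto.
Qed.

Ltac ceq := apply toC_inj; unfold toC; simpl; f_equal; ring.
Definition e (j : nat) : V := fun k => if Nat.eqb k j then mkC 1 0 else C0.
Definition Sop (x : V) : V := fun k => Cadd C0 (Cmul (x O) (e O k)).
Definition Pop (x : V) : V := vsub x (Sop x).

Lemma l2_single x j : (forall k, k <> j -> Cnorm2 (x k) = 0) -> is_l2 x /\ Q x = Cnorm2 (x j).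
Proof.
  intro H. pose proof (is_series_single _ j H) as Hs. split.
  apply is_l2_ex. exists (Cnorm2 (x j)); auto.
  unfold Q. apply is_series_unique; auto.
Qed.

Lemma Cnorm2_e j k : Cnorm2 (e j k) = if Nat.eqb k j then 1 else 0.
Proof. unfold e. destruct (Nat.eqb k j); unfold Cnorm2; simpl; ring. Qed.

Lemma e_l2 j : is_l2 (e j) /\ Q (e j) = 1.
Proof.
  destruct (l2_single (e j) j) as [H1 H2].
  intros k Hk. rewrite Cnorm2_e. apply Nat.eqb_neq in Hk. rewrite Hk; auto.
  split; auto. rewrite H2, Cnorm2_e, Nat.eqb_refl. auto.
Qed.

Lemma Cnorm2_Sop x k : Cnorm2 (Sop x k) = if Nat.eqb k O then Cnorm2 (x O) else 0.
Proof. unfold Sop, e. destruct (Nat.eqb k O); unfold Cnorm2; simpl; ring. Qed.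

Lemma Cnorm2_Pop x k : Cnorm2 (Pop x k) = if Nat.eqb k O then 0 else Cnorm2 (x k).
Proof.
  unfold Pop, vsub, Sop, e. destruct k; simpl. unfold Cnorm2; simpl; ring.
  unfold Cnorm2; simpl; ring.
Qed.

Lemma Sop_le x k : Cnorm2 (Sop x k) <= Cnorm2 (x k).
Proof. rewrite Cnorm2_Sop. destruct k; simpl. lra. apply Cnorm2_ge0. Qed.
Lemma Pop_le x k : Cnorm2 (Pop x k) <= Cnorm2 (x k).
Proof. rewrite Cnorm2_Pop. destruct k; simpl. apply Cnorm2_ge0. lra. Qed.

Lemma l2norm_cmp x y : is_l2 x -> (forall k, Cnorm2 (y k) <= Cnorm2 (x k)) ->
  is_l2 y /\ l2norm y <= l2norm x.
Proof.
  intros Hx H. destruct (l2_cmp x y Hx H) as [Hy HQ]. split; auto.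
  rewrite !l2norm_sqrt by auto. apply sqrt_le_1_alt; auto.
Qed.

Lemma Sop_bounded : bounded_operator Sop.
Proof.
  split; [|split; [|split]].
  - intros x Hx. apply (l2norm_cmp x); auto. apply Sop_le.
  - intros x y _ _. extensionality k. unfold Sop, vadd. ceq.
  - intros c x _. extensionality k. unfold Sop, vscal. ceq.
  - exists 1. intros x Hx. rewrite Rmult_1_l. apply (l2norm_cmp x); auto. apply Sop_le.
Qed.

Lemma Sop_finite : finite_rank_operator Sop.
Proof.
  split. apply Sop_bounded. exists 1%nat, (fun _ => e O). split.
  - intros; apply e_l2.
  - intros x _. exists (fun _ => x O). reflexivity.
Qed.

Lemma Pop_norm : opnorm_is (fun x => vsub x (Sop x)) 1.
Proof.
  split.
  - intros s [x [Hx [Hn ->]]]. fold (Pop x).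
    destruct (l2norm_cmp x (Pop x) Hx (Pop_le x)). lra.
  - intros b Hb. apply Hb. exists (e 1%nat). destruct (e_l2 1%nat) as [H1 H2].
    split; auto. rewrite l2norm_sqrt, H2, sqrt_1 by auto. split. lra.
    fold (Pop (e 1%nat)).
    destruct (l2_single (Pop (e 1%nat)) 1%nat) as [H3 H4].
    { intros k Hk. rewrite Cnorm2_Pop, Cnorm2_e. destruct k. reflexivity.
      destruct k. lia. reflexivity. }
    rewrite l2norm_sqrt, H4 by auto. rewrite Cnorm2_Pop, Cnorm2_e. simpl. rewrite sqrt_1. auto.
Qed.

Definition isU (U : (nat -> Prop) -> Prop) : Prop :=
 (forall A B, U A -> U B -> U (fun n => A n /\ B n)) /\
 (forall A B : nat -> Prop, (forall n, A n -> B n) -> U A -> U B) /\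
 ~ U (fun _ => False) /\
 (forall A, U A \/ U (fun n => ~ A n)) /\
 (forall N, U (fun n => (N <= n)%nat)).

Section UL.
Context (U : (nat -> Prop) -> Prop) (HU : isU U).

Lemma U_I A B : U A -> U B -> U (fun n => A n /\ B n).
Proof. apply HU. Qed.
Lemma U_mono (A B : nat -> Prop) : (forall n, A n -> B n) -> U A -> U B.
Proof. apply HU. Qed.
Lemma U_ne A : U A -> exists n, A n.
Proof.
  intro H. apply NNPP. intro Hn. apply (proj1 (proj2 (proj2 HU))).
  apply (U_mono A); auto. intros n An. apply Hn. exists n; auto.
Qed.
Lemma U_T : U (fun _ => True).
Proof. apply (U_mono (fun n => (0 <= n)%nat)); auto. apply HU. Qed.
Lemma U_ev (A : nat -> Prop) N : (forall n, (N <= n)%nat -> A n) -> U A.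
Proof. intro H. apply (U_mono (fun n => (N <= n)%nat)); auto. apply HU. Qed.

Lemma ulim_R (u : nat -> R) M : (forall n, Rabs (u n) <= M) ->
  exists l, forall eps, 0 < eps -> U (fun n => Rabs (u n - l) < eps).
Proof.
  intro HM.
  set (E := fun t => U (fun n => t <= u n)).
  assert (HB : bound E).
  { exists M. intros t Ht. destruct (U_ne _ Ht) as [n Hn].
    pose proof (HM n). apply Rabs_le_between in H. lra. }
  assert (HE : exists t, E t).
  { exists (-M). apply (U_mono (fun _ => True)). intros n _. pose proof (HM n).
    apply Rabs_le_between in H. lra. apply U_T. }
  destruct (completeness E HB HE) as [l [Hub Hlub]].
  exists l. intros eps Heps.
  assert (HA : U (fun n => l - eps < u n)).
  { apply NNPP. intro Hn. assert (l <= l - eps).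
    { apply Hlub. intros t Ht. destruct (Rle_dec t (l - eps)); auto. exfalso. apply Hn.
      apply (U_mono (fun n => t <= u n)); auto. intros; lra. }
    lra. }
  assert (HB2 : U (fun n => u n < l + eps)).
  { destruct (proj1 (proj2 (proj2 (proj2 HU))) (fun n => u n < l + eps)) as [|H]; auto.
    exfalso. assert (E (l + eps)).
    { apply (U_mono _ _ (fun n (Hn : ~ u n < l + eps) => Rnot_lt_le _ _ Hn) H). }
    apply Hub in H0. lra. }
  apply (U_mono (fun n => l - eps < u n /\ u n < l + eps)).
  intros n [h1 h2]. apply Rabs_def1; lra. apply U_I; auto.
Qed.

Definition Uconv (s : nat -> Cplx) (l : Cplx) : Prop :=
  forall eps, 0 < eps -> U (fun n => Cmod (toC (s n) - toC l) < eps).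

Lemma Uconv_exists s M : (forall n, Cmod (toC (s n)) <= M) -> exists l, Uconv s l.
Proof.
  intro HM.
  destruct (ulim_R (fun n => Re (s n)) M) as [l1 H1].
  { intro n. eapply Rle_trans. apply (fst_le_Cmod (toC (s n))). auto. }
  destruct (ulim_R (fun n => Im (s n)) M) as [l2 H2].
  { intro n. eapply Rle_trans. apply (snd_le_Cmod (toC (s n))). auto. }
  exists (mkC l1 l2). intros eps Heps.
  apply (U_mono (fun n => Rabs (Re (s n) - l1) < eps/2 /\ Rabs (Im (s n) - l2) < eps/2)).
  2: apply U_I; [apply H1|apply H2]; lra.
  intros n Hn. destruct Hn. eapply Rle_lt_trans. apply Cmod_le_parts.
  replace (fst (toC (s n) - toC {| Re := l1; Im := l2 |})%C) with (Re (s n) - l1) by (simpl; ring).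
  replace (snd (toC (s n) - toC {| Re := l1; Im := l2 |})%C) with (Im (s n) - l2) by (simpl; ring).
  lra.
Qed.

Lemma Uconv_unique s l1 l2 : Uconv s l1 -> Uconv s l2 -> l1 = l2.
Proof.
  intros H1 H2. apply toC_inj.
  destruct (Req_dec (Cmod (toC l1 - toC l2)) 0) as [E|E].
  - apply Cmod_eq_0 in E. replace (toC l1) with ((toC l1 - toC l2) + toC l2)%C by ring.
    rewrite E. ring.
  - exfalso. pose proof (Cmod_ge_0 (toC l1 - toC l2)).
    set (d := Cmod (toC l1 - toC l2)) in *.
    destruct (U_ne _ (U_I _ _ (H1 (d/2) ltac:(lra)) (H2 (d/2) ltac:(lra)))) as [n [A B]].
    assert (d <= Cmod (toC (s n) - toC l1) + Cmod (toC (s n) - toC l2)).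
    { unfold d. replace (toC l1 - toC l2)%C with (-(toC (s n) - toC l1) + (toC (s n) - toC l2))%C by ring.
      eapply Rle_trans. apply Cmod_triangle. rewrite Cmod_opp. lra. }
    lra.
Qed.

Lemma Uconv_ext s t l : (forall n, s n = t n) -> Uconv s l -> Uconv t l.
Proof. intros E H eps Heps. apply (U_mono (fun n => Cmod (toC (s n) - toC l) < eps)).
  intros n Hn. rewrite <- E; auto. apply H; auto. Qed.

Lemma Uconv_const c : Uconv (fun _ => c) c.
Proof.
  intros eps Heps. apply (U_mono (fun _ => True)); [|apply U_T].
  intros n _. replace (toC c - toC c)%C with (RtoC 0) by ring. rewrite Cmod_0. auto.
Qed.

Lemma Uconv_add s t l m : Uconv s l -> Uconv t m -> Uconv (fun n => Cadd (s n) (t n)) (Cadd l m).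
Proof.
  intros H1 H2 eps Heps.
  apply (U_mono (fun n => Cmod (toC (s n) - toC l) < eps/2 /\ Cmod (toC (t n) - toC m) < eps/2)).
  2: apply U_I; [apply H1|apply H2]; lra.
  intros n Hn. destruct Hn. rewrite !toC_add.
  replace (toC (s n) + toC (t n) - (toC l + toC m))%C with ((toC (s n) - toC l) + (toC (t n) - toC m))%C by ring.
  eapply Rle_lt_trans. apply Cmod_triangle. lra.
Qed.

Lemma Uconv_mul s t l m M : (forall n, Cmod (toC (s n)) <= M) -> Uconv s l -> Uconv t m ->
  Uconv (fun n => Cmul (s n) (t n)) (Cmul l m).
Proof.
  intros HM H1 H2 eps Heps.
  assert (HM0 : 0 <= M) by (eapply Rle_trans; [apply Cmod_ge_0|apply (HM O)]).
  set (K := M + Cmod (toC m) + 1).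
  assert (HK : 0 < K) by (pose proof (Cmod_ge_0 (toC m)); unfold K; lra).
  apply (U_mono (fun n => Cmod (toC (s n) - toC l) < eps/(2*K) /\ Cmod (toC (t n) - toC m) < eps/(2*K))).
  2: apply U_I; [apply H1|apply H2]; apply Rdiv_lt_0_compat; lra.
  intros n Hn. destruct Hn as [A B]. rewrite !toC_mul.
  replace (toC (s n) * toC (t n) - toC l * toC m)%C with (toC (s n) * (toC (t n) - toC m) + (toC (s n) - toC l) * toC m)%C by ring.
  eapply Rle_lt_trans. apply Cmod_triangle. rewrite !Cmod_mult.
  pose proof (HM n). pose proof (Cmod_ge_0 (toC (s n))). pose proof (Cmod_ge_0 (toC m)).
  pose proof (Cmod_ge_0 (toC (t n) - toC m)). pose proof (Cmod_ge_0 (toC (s n) - toC l)).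
  assert (E1 : Cmod (toC (s n)) * Cmod (toC (t n) - toC m) <= K * (eps / (2 * K))).
  { apply Rmult_le_compat; try lra. unfold K; lra. }
  assert (Hek : 0 < eps / (2 * K)) by (apply Rdiv_lt_0_compat; lra).
  assert (E2 : Cmod (toC (s n) - toC l) * Cmod (toC m) < (eps / (2 * K)) * K).
  { apply Rle_lt_trans with ((eps / (2 * K)) * Cmod (toC m)).
    apply Rmult_le_compat_r; lra. apply Rmult_lt_compat_l; auto. unfold K; lra. }
  assert (E3 : K * (eps / (2 * K)) = eps / 2) by (field; lra).
  lra.
Qed.

Definition phiU (z : nat -> V) (F : V -> Cplx) : Cplx :=
  epsilon (inhabits C0) (fun l => Uconv (fun n => F (z n)) l).

Lemma phiU_eq z F l : Uconv (fun n => F (z n)) l -> phiU z F = l.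
Proof.
  intro H. unfold phiU. apply (Uconv_unique (fun n => F (z n))); auto.
  apply (epsilon_spec (inhabits C0) (fun l => Uconv (fun n => F (z n)) l)). exists l; auto.
Qed.

End UL.

Definition tt (n : nat) : R := / (INR n + 2).
Definition al (n : nat) : R := sqrt (tt n / 2).
Definition be (n : nat) : R := sqrt (1 - tt n).
Definition z (n : nat) : V := vadd (vscal (mkC (al n) 0) (e O)) (vscal (mkC (be n) 0) (e (S n))).

Lemma tt_bounds n : 0 < tt n <= 1/2.
Proof.
  unfold tt. pose proof (pos_INR n). split. apply Rinv_0_lt_compat; lra.
  replace (1/2) with (/2) by field. apply Rinv_le_contravar; lra.
Qed.
Lemma al_sq n : al n * al n = tt n / 2.
Proof. unfold al. apply sqrt_sqrt. pose proof (tt_bounds n). lra. Qed.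
Lemma be_sq n : be n * be n = 1 - tt n.
Proof. unfold be. apply sqrt_sqrt. pose proof (tt_bounds n). lra. Qed.
Lemma al_ge0 n : 0 <= al n. Proof. apply sqrt_pos. Qed.
Lemma be_ge0 n : 0 <= be n. Proof. apply sqrt_pos. Qed.
Lemma be_le1 n : be n <= 1.
Proof. pose proof (be_sq n). pose proof (be_ge0 n). pose proof (tt_bounds n). nra. Qed.

Lemma z0 n : toC (z n O) = RtoC (al n).
Proof. unfold z, vadd, vscal, e. simpl. apply injective_projections; simpl; ring. Qed.
Lemma zS n k : toC (z n (S k)) = if Nat.eqb k n then RtoC (be n) else RtoC 0.
Proof.
  unfold z, vadd, vscal, e. simpl. destruct (Nat.eqb k n); apply injective_projections; simpl; ring.
Qed.

Lemma Cnorm2_toC w : Cnorm2 w = fst (toC w) * fst (toC w) + snd (toC w) * snd (toC w).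
Proof. reflexivity. Qed.

Lemma z_l2 n : is_l2 (z n) /\ Q (z n) = 1 - tt n / 2.
Proof.
  destruct (l2_single (sh (z n)) n) as [H1 H2].
  { intros k Hk. unfold sh. rewrite Cnorm2_toC, zS. apply Nat.eqb_neq in Hk. rewrite Hk. simpl; ring. }
  assert (Hz : is_l2 (z n)).
  { apply is_l2_ex. apply is_l2_ex in H1. unfold sh in H1.
    apply (ex_series_incr_1 (fun k => Cnorm2 (z n k))). auto. }
  split; auto. rewrite Q_sh, H2 by auto. unfold sh. rewrite !Cnorm2_toC, z0, zS, Nat.eqb_refl.
  simpl. pose proof (al_sq n). pose proof (be_sq n). lra.
Qed.

Lemma z_ball n : ball (z n).
Proof. apply ball_Q. destruct (z_l2 n). split; auto. pose proof (tt_bounds n). lra. Qed.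

Lemma Gser_z n : Gser (z n) (z n) = RtoC (be n * be n).
Proof.
  unfold Gser, cser, RtoC. f_equal.
  - rewrite (Series_ext _ (fun k => if Nat.eqb k n then be n * be n else 0)).
    rewrite (Series_single _ n). rewrite Nat.eqb_refl; auto.
    intros k Hk. apply Nat.eqb_neq in Hk. rewrite Hk; auto.
    intro k. rewrite zS. destruct (Nat.eqb k n); simpl; ring.
  - rewrite (Series_ext _ (fun k => 0)).
    rewrite (Series_single _ O); auto.
    intro k. rewrite zS. destruct (Nat.eqb k n); simpl; ring.
Qed.

Lemma fC_z n : fC (z n) = RtoC (1/2).
Proof.
  unfold fC. rewrite z0, Gser_z. pose proof (tt_bounds n).
  rewrite <- RtoC_mult, <- RtoC_minus, <- RtoC_div. f_equal.
  rewrite al_sq, be_sq. field. lra.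
  rewrite be_sq. lra.
Qed.

Lemma fF_Pop x : fF (vsub x (Sop x)) = C0.
Proof.
  unfold fF, fC.
  assert (H : toC (vsub x (Sop x) O) = RtoC 0).
  { unfold vsub, Sop, e. simpl. apply injective_projections; simpl; ring. }
  rewrite H. replace (RtoC 0 * RtoC 0 / (1 - Gser (vsub x (Sop x)) (vsub x (Sop x))))%C with (RtoC 0) by (apply injective_projections; simpl; ring).
  reflexivity.
Qed.

Lemma vscal_l2 c x : is_l2 x -> is_l2 (vscal c x).
Proof.
  intro H. apply is_l2_ex in H. apply is_l2_ex.
  apply (ex_series_ext (fun k => Cnorm2 c * Cnorm2 (x k))).
  intro k. unfold vscal, Cnorm2, Cmul; simpl; ring.
  apply ex_series_Rscal; auto.
Qed.

Definition xs (c : nat -> Cplx) (N : nat) : V := fun k => if Nat.ltb k N then c k else C0.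

Lemma xs_S c N : xs c (S N) = vadd (xs c N) (vscal (c N) (e N)).
Proof.
  extensionality k. unfold xs, vadd, vscal, e.
  destruct (lt_eq_lt_dec k N) as [[H|H]|H].
  - rewrite (proj2 (Nat.ltb_lt k (S N))), (proj2 (Nat.ltb_lt k N)), (proj2 (Nat.eqb_neq k N)) by lia; ceq.
  - subst. rewrite (proj2 (Nat.ltb_lt N (S N))), (proj2 (Nat.ltb_ge N N)), Nat.eqb_refl by lia; ceq.
  - rewrite (proj2 (Nat.ltb_ge k (S N))), (proj2 (Nat.ltb_ge k N)), (proj2 (Nat.eqb_neq k N)) by lia; ceq.
Qed.

Lemma xs_0 c : xs c O = vscal C0 (e O).
Proof. extensionality k. unfold xs, vscal, e. simpl. ceq. Qed.

Lemma xs_l2 c N : is_l2 (xs c N) /\ Q (xs c N) = sN (fun k => Cnorm2 (c k)) N.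
Proof.
  assert (H : forall k, (N <= k)%nat -> Cnorm2 (xs c N k) = 0).
  { intros k Hk. unfold xs. apply Nat.ltb_ge in Hk. rewrite Hk. unfold Cnorm2; simpl; ring. }
  pose proof (is_series_finite _ _ H) as Hs. split.
  apply is_l2_ex; eexists; eauto.
  unfold Q. rewrite (is_series_unique _ _ Hs).
  clear Hs H. assert (forall m, (m <= N)%nat -> sN (fun k => Cnorm2 (xs c N k)) m = sN (fun k => Cnorm2 (c k)) m).
  { induction m; intros; simpl; auto. rewrite IHm by lia. unfold xs.
    assert (Nat.ltb m N = true) by (apply Nat.ltb_lt; lia). rewrite H0; auto. }
  apply H; lia.
Qed.

Lemma blf_e_to0 L : bounded_linear_functional L ->
  forall eps, 0 < eps -> exists N, forall k, (N <= k)%nat -> Cmod (toC (L (e k))) < eps.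
Proof.
  intros [Hadd [Hsc [M HM]]] eps Heps.
  set (u := fun k => Cnorm2 (L (e k))).
  set (c := fun k => ofC (Cconj (toC (L (e k))))).
  assert (HL : forall N, toC (L (xs c N)) = RtoC (sN u N)).
  { induction N.
    - rewrite xs_0, Hsc by apply e_l2. apply injective_projections; simpl; ring.
    - rewrite xs_S, Hadd. 2: apply xs_l2. 2: apply vscal_l2, e_l2.
      rewrite Hsc by apply e_l2. rewrite toC_add, toC_mul, IHN.
      unfold c, u. rewrite toC_ofC. simpl sN. rewrite Cnorm2_toC.
      apply injective_projections; simpl; ring. }
  assert (Hu0 : forall k, 0 <= u k) by (intro; apply Cnorm2_ge0).
  assert (HsN0 : forall N, 0 <= sN u N).
  { induction N; simpl. lra. pose proof (Hu0 N). lra. }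
  assert (Hcu : forall k, Cnorm2 (c k) = u k).
  { intro k. unfold c, u. rewrite Cnorm2_toC, toC_ofC, (Cnorm2_toC (L (e k))). simpl. ring. }
  assert (Hb : forall N, sN u N <= M * M).
  { intro N. destruct (xs_l2 c N) as [Hl HQ].
    pose proof (HM _ Hl) as HN. rewrite Cabs_C, HL, Cmod_R, Rabs_right in HN by (apply Rle_ge; auto).
    rewrite l2norm_sqrt, HQ in HN by auto.
    assert (E : sN (fun k => Cnorm2 (c k)) N = sN u N).
    { clear HN HQ Hl. induction N; simpl; auto. rewrite IHN, Hcu. auto. }
    rewrite E in HN. set (s := sN u N) in *. pose proof (HsN0 N). fold s in H.
    pose proof (sqrt_pos s). pose proof (sqrt_sqrt s H).
    destruct (Rle_lt_dec s 0). nra.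
    assert (0 < sqrt s) by (apply sqrt_lt_R0; auto).
    assert (sqrt s <= M) by (apply Rmult_le_reg_r with (sqrt s); nra).
    nra. }
  assert (Hex : ex_series u).
  { destruct (growing_cv (sum_f_R0 u)) as [l Hl].
    - intro n. simpl. pose proof (Hu0 (S n)). lra.
    - exists (M * M). intros y [n ->]. rewrite sum_f_R0_sN. auto.
    - exists l. apply is_series_Reals. exact Hl. }
  apply ex_series_lim_0 in Hex. apply is_lim_seq_spec in Hex.
  assert (He2 : 0 < eps * eps) by nra.
  destruct (Hex (mkposreal _ He2)) as [N HN]. exists N. intros k Hk.
  specialize (HN k Hk). simpl in HN. rewrite Rminus_0_r, Rabs_right in HN by (apply Rle_ge; auto).
  unfold u in HN. rewrite Cnorm2_C in HN. pose proof (Cmod_ge_0 (toC (L (e k)))).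
  simpl in HN. nra.
Qed.

Definition one : V -> Cplx := fun _ => mkC 1 0.

Lemma one_Hinf : Hinf one.
Proof.
  split.
  - intros a Ha. exists (fun _ => C0). split; [split; [|split]|].
    + intros; ceq.
    + intros; ceq.
    + exists 0. intros x _. rewrite Cabs_C, toC_C0, Cmod_0. lra.
    + intros eps Heps. exists 1. split. lra. intros h Hh _ _.
      unfold one. replace (Csub (mkC 1 0) (Cadd (mkC 1 0) C0)) with C0 by ceq.
      rewrite Cabs_C, toC_C0, Cmod_0. pose proof (l2norm_ge0 h). nra.
  - exists 1. intros x _. unfold one, Cabs, Cnorm2. cbn [Re Im]. replace (1*1+0*0) with 1 by ring. rewrite sqrt_1. lra.
Qed.

Lemma Hinf_seq_bounded f : Hinf f -> exists M, forall n, Cmod (toC (f (z n))) <= M.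
Proof.
  intros [_ [M HM]]. exists M. intro n. rewrite <- Cabs_C. apply HM, z_ball.
Qed.

Lemma phi_spectrum U : isU U -> in_spectrum (phiU U z).
Proof.
  intro HU. split; [|split; [|split; [|split]]].
  - intros f g _ _ Heq. unfold phiU.
    assert (E : (fun n => f (z n)) = (fun n => g (z n))) by (extensionality n; apply Heq, z_ball).
    rewrite E. reflexivity.
  - intros f g Hf Hg.
    destruct (Hinf_seq_bounded f Hf) as [Mf HMf]. destruct (Hinf_seq_bounded g Hg) as [Mg HMg].
    destruct (Uconv_exists U HU _ _ HMf) as [lf Hlf]. destruct (Uconv_exists U HU _ _ HMg) as [lg Hlg].
    rewrite (phiU_eq U HU z f lf), (phiU_eq U HU z g lg) by auto.
    apply (phiU_eq U HU z (fadd f g)). apply (Uconv_add U HU _ _ _ _ Hlf Hlg).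
  - intros c f Hf.
    destruct (Hinf_seq_bounded f Hf) as [Mf HMf].
    destruct (Uconv_exists U HU _ _ HMf) as [lf Hlf].
    rewrite (phiU_eq U HU z f lf) by auto.
    apply (phiU_eq U HU z (fscal c f)).
    apply (Uconv_mul U HU (fun _ => c) _ c lf (Cmod (toC c))); auto.
    intro; apply Rle_refl. apply Uconv_const; auto.
  - intros f g Hf Hg.
    destruct (Hinf_seq_bounded f Hf) as [Mf HMf]. destruct (Hinf_seq_bounded g Hg) as [Mg HMg].
    destruct (Uconv_exists U HU _ _ HMf) as [lf Hlf]. destruct (Uconv_exists U HU _ _ HMg) as [lg Hlg].
    rewrite (phiU_eq U HU z f lf), (phiU_eq U HU z g lg) by auto.
    apply (phiU_eq U HU z (fmul f g)). apply (Uconv_mul U HU _ _ _ _ Mf HMf Hlf Hlg).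
  - exists one. split. apply one_Hinf.
    rewrite (phiU_eq U HU z one (mkC 1 0)). intro E. injection E. lra.
    apply (Uconv_ext U HU (fun _ => mkC 1 0)). intro; reflexivity. apply Uconv_const; auto.
Qed.

Lemma phi_fiber U : isU U -> in_fiber0 (phiU U z).
Proof.
  intro HU. split. apply phi_spectrum; auto.
  intros L HL. apply (phiU_eq U HU). intros eps Heps.
  pose proof HL as [Hadd [Hsc _]].
  destruct (blf_e_to0 L HL (eps/2) ltac:(lra)) as [N1 HN1].
  set (A := Cmod (toC (L (e O)))).
  assert (HA : 0 <= A) by apply Cmod_ge_0.
  destruct (INR_unbounded (4 * (A+1)^2 / (eps*eps))) as [N2 HN2].
  apply (U_ev U HU _ (max N1 N2)). intros n Hn.
  unfold z. rewrite Hadd by (apply vscal_l2, e_l2). rewrite !Hsc by apply e_l2.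
  rewrite toC_C0, toC_add, !toC_mul. replace (toC (mkC (al n) 0)) with (RtoC (al n)) by reflexivity.
  replace (toC (mkC (be n) 0)) with (RtoC (be n)) by reflexivity.
  replace (RtoC (al n) * toC (L (e O)) + RtoC (be n) * toC (L (e (S n))) - 0)%C
    with (RtoC (al n) * toC (L (e O)) + RtoC (be n) * toC (L (e (S n))))%C by ring.
  assert (H1 : Cmod (toC (L (e (S n)))) < eps / 2) by (apply HN1; lia).
  assert (Hn2 : INR N2 <= INR n) by (apply le_INR; lia).
  pose proof (al_ge0 n). pose proof (be_ge0 n). pose proof (be_le1 n).
  assert (Hal : al n * (A + 1) < eps / 2).
  { pose proof (al_sq n) as Hsq. unfold tt in Hsq. pose proof (pos_INR n).
    assert (HX : (al n * (A+1)) * (al n * (A+1)) * (2 * (INR n + 2)) = (A+1)^2).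
    { replace ((al n * (A+1)) * (al n * (A+1))) with ((al n * al n) * (A+1)^2) by ring.
      rewrite Hsq. field. lra. }
    assert (HY : (A+1)^2 < (eps/2) * (eps/2) * (2 * (INR n + 2))).
    { assert (Hlt : 4 * (A + 1) ^ 2 / (eps * eps) < INR n) by lra.
      apply (Rmult_lt_compat_r (eps * eps)) in Hlt; [|nra].
      replace (4 * (A + 1) ^ 2 / (eps * eps) * (eps * eps)) with (4 * (A+1)^2) in Hlt by (field; lra).
      nra. }
    set (X := al n * (A + 1)) in *.
    assert (0 <= X) by (unfold X; nra).
    destruct (Rlt_le_dec X (eps/2)); auto.
    assert ((eps/2) * (eps/2) <= X * X) by nra. nra. }
  eapply Rle_lt_trans. apply Cmod_triangle. rewrite !Cmod_mult, !Cmod_R, !Rabs_right by lra.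
  fold A. pose proof (Cmod_ge_0 (toC (L (e (S n))))).
  assert (al n * A <= al n * (A + 1)) by nra.
  assert (be n * Cmod (toC (L (e (S n)))) <= Cmod (toC (L (e (S n))))) by nra.
  lra.
Qed.

Theorem mainTheorem3 :
  exists (S : V -> V) (phi : (V -> Cplx) -> Cplx) (f : V -> Cplx),
    finite_rank_operator S /\
    opnorm_is (fun x => vsub x (S x)) 1 /\
    in_fiber0 phi /\
    Hinf f /\
    phi f <> phi (fun x => f (vsub x (S x))).
Proof.
  destruct UF.ultra_exists as [U HU].
  assert (HU' : isU U) by exact HU.
  exists Sop, (phiU U z), fF.
  split. apply Sop_finite.
  split. apply Pop_norm.
  split. apply phi_fiber; auto.
  split. apply f_Hinf.
  rewrite (phiU_eq U HU' z fF (ofC (RtoC (1/2)))).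
  rewrite (phiU_eq U HU' z (fun x => fF (vsub x (Sop x))) C0).
  - unfold ofC, RtoC, C0. simpl. intro E. injection E. lra.
  - apply (Uconv_ext U HU' (fun _ => C0)). intro n. simpl. rewrite fF_Pop. auto. apply Uconv_const; auto.
  - apply (Uconv_ext U HU' (fun _ => ofC (RtoC (1/2)))). intro n. unfold fF. rewrite fC_z. auto.
    apply Uconv_const; auto.
Qed.
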